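(* Assume $p_0,p_1>0$. For $t\in\mathbb{R}$ let $D_{n,-}(t)=\frac1{n_1}\sum_{j=1}^{n_1}I\big(\eta_1(X_{1,j})>\tfrac12+\tfrac{t}{2p_1}\big)-\frac1{n_0}\sum_{j=1}^{n_0}I\big(\eta_0(X_{0,j})\ge\tfrac12-\tfrac{t}{2p_0}\big)$ and $D_{n,+}(t)=\frac1{n_1}\sum_{j=1}^{n_1}I\big(\eta_1(X_{1,j})\ge\tfrac12+\tfrac{t}{2p_1}\big)-\frac1{n_0}\sum_{j=1}^{n_0}I\big(\eta_0(X_{0,j})>\tfrac12-\tfrac{t}{2p_0}\big)$. Then for every $t\in\mathbb{R}$ and $0<\epsilon\le\sqrt{(p_1\wedge p_0)/2}$, $$\max\Big\{P^{\otimes n}\big(|D_{n,+}(t)-D_+(t)|>\epsilon\big),\,P^{\otimes n}\big(|D_{n,-}(t)-D_-(t)|>\epsilon\big)\Big\}\le 8\exp\Big(-\frac{n(p_1\wedge p_0)\epsilon^2}{4}\Big).$$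
   Context: $(X,A,Y)$ is a random vector on $\mathbb{R}^d\times\{0,1\}\times\{0,1\}$ with law $P$; $p_a=P(A=a)$; $P_{X|A=a}$ the conditional law of $X$ given $A=a$; $\eta_a(x)=P(Y=1\mid A=a,X=x)$. $D_-(t)=P_{X|A=1}\big(\eta_1(X)>\tfrac12+\tfrac{t}{2p_1}\big)-P_{X|A=0}\big(\eta_0(X)\ge\tfrac12-\tfrac{t}{2p_0}\big)$ and $D_+(t)=P_{X|A=1}\big(\eta_1(X)\ge\tfrac12+\tfrac{t}{2p_1}\big)-P_{X|A=0}\big(\eta_0(X)>\tfrac12-\tfrac{t}{2p_0}\big)$. $\{(X_i,A_i,Y_i)\}_{i=1}^n$ is an i.i.d. sample from $P$, $n_a=\#\{i:A_i=a\}$, and $X_{a,1},\dots,X_{a,n_a}$ are the features of the observations with $A_i=a$; an empty average is interpreted as $0$. *)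

(* Defs.v *)
From HB Require Import structures.
From mathcomp Require Import all_boot all_order all_algebra.
From mathcomp Require Import all_classical all_reals all_analysis.
Set Implicit Arguments. Unset Strict Implicit. Unset Printing Implicit Defensive.
Import Order.TTheory GRing.Theory Num.Theory.
Local Open Scope classical_set_scope.
Local Open Scope ring_scope.

(* An observation (X, A, Y) lives in R^d x {0,1} x {0,1};
   R^d is d.-tuple R with the product (= Borel) sigma-algebra,
   {0,1} is bool (true = 1) with the discrete sigma-algebra. *)
Definition obs (R : realType) (d : nat) := ((d.-tuple R * bool) * bool)%type.

Definition feat {R : realType} {d : nat} (z : obs R d) : d.-tuple R := z.1.1.
Definition grp  {R : realType} {d : nat} (z : obs R d) : bool := z.1.2.
Definition lab  {R : realType} {d : nat} (z : obs R d) : bool := z.2.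

Definition pA {R : realType} {d : nat} (P : probability (obs R d) R) (a : bool) : R :=
  fine (P [set z | grp z = a]).

Definition PXgivenA {R : realType} {d : nat} (P : probability (obs R d) R)
  (a : bool) (E : set (d.-tuple R)) : R :=
  fine (P [set z | E (feat z) /\ grp z = a]) / pA P a.

Definition is_regression_fun {R : realType} {d : nat}
  (P : probability (obs R d) R) (eta : bool -> d.-tuple R -> R) : Prop :=
  forall a : bool,
    measurable_fun setT (eta a) /\
    (forall x, 0 <= eta a x <= 1) /\
    (forall B : set (d.-tuple R), measurable B ->
       P [set z | B (feat z) /\ grp z = a /\ lab z = true] =
       (\int[P]_(z in [set z | B (feat z) /\ grp z = a]) (eta a (feat z))%:E)%E).

Definition Dminus {R : realType} {d : nat} (P : probability (obs R d) R)
  (eta : bool -> d.-tuple R -> R) (t : R) : R :=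
  PXgivenA P true [set x | 1/2 + t / (2 * pA P true) < eta true x]
  - PXgivenA P false [set x | 1/2 - t / (2 * pA P false) <= eta false x].

Definition Dplus {R : realType} {d : nat} (P : probability (obs R d) R)
  (eta : bool -> d.-tuple R -> R) (t : R) : R :=
  PXgivenA P true [set x | 1/2 + t / (2 * pA P true) <= eta true x]
  - PXgivenA P false [set x | 1/2 - t / (2 * pA P false) < eta false x].

Definition iid_sample {R : realType} {d : nat} {dO : measure_display}
  {Omega : measurableType dO} (Q : probability Omega R)
  (P : probability (obs R d) R) (n : nat) (Z : 'I_n -> Omega -> obs R d) : Prop :=
  (forall i, measurable_fun setT (Z i)) /\
  (forall i (B : set (obs R d)), measurable B -> Q (Z i @^-1` B) = P B) /\
  (forall B : 'I_n -> set (obs R d), (forall i, measurable (B i)) ->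
     Q (\bigcap_(i in [set: 'I_n]) (Z i @^-1` B i)) =
     (\prod_(i < n) fine (Q (Z i @^-1` B i)))%:E).

(* (1/n_a) * #{ j : A_j = a and F_j }, with an empty average equal to 0,
   where n_a = #{ j : A_j = a }. *)
Definition group_avg {R : realType} (n : nat) (A : 'I_n -> bool) (a : bool)
  (F : 'I_n -> bool) : R :=
  let na := #|[set i | A i == a]| in
  if na == 0%N then 0
  else (\sum_(i < n | A i == a) (F i)%:R) / na%:R.

Definition Dn_minus {R : realType} {d : nat} {dO : measure_display}
  {Omega : measurableType dO} (P : probability (obs R d) R)
  (eta : bool -> d.-tuple R -> R) (n : nat) (Z : 'I_n -> Omega -> obs R d)
  (t : R) (w : Omega) : R :=
  group_avg (fun i => grp (Z i w)) true
    (fun i => 1/2 + t / (2 * pA P true) < eta true (feat (Z i w)))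
  - group_avg (fun i => grp (Z i w)) false
    (fun i => 1/2 - t / (2 * pA P false) <= eta false (feat (Z i w))).

Definition Dn_plus {R : realType} {d : nat} {dO : measure_display}
  {Omega : measurableType dO} (P : probability (obs R d) R)
  (eta : bool -> d.-tuple R -> R) (n : nat) (Z : 'I_n -> Omega -> obs R d)
  (t : R) (w : Omega) : R :=
  group_avg (fun i => grp (Z i w)) true
    (fun i => 1/2 + t / (2 * pA P true) <= eta true (feat (Z i w)))
  - group_avg (fun i => grp (Z i w)) false
    (fun i => 1/2 - t / (2 * pA P false) < eta false (feat (Z i w))).

(* Main.v *)
Require Import Defs.
From HB Require Import structures.
From mathcomp Require Import all_boot all_order all_algebra.
From mathcomp Require Import all_classical all_reals all_analysis.
From mathcomp Require Import ring lra.
Import Order.TTheory GRing.Theory Num.Theory.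
Local Open Scope classical_set_scope.
Local Open Scope ring_scope.
Lemma poly_bound {R : realType} (x : R) : -(5/8) <= x <= 3/8 ->
  1 <= (1 + x + 4/5 * x^+2) * (1 - x/4)^+4.
Proof. move=> /andP[h1 h2]. nra. Qed.

Lemma exp_bound {R : realType} (x : R) : -(5/8) <= x <= 3/8 ->
  expR x <= 1 + x + 4/5 * x^+2.
Proof.
move=> hx; have := poly_bound x hx; case/andP: hx => h1 h2 hp.
have hpos : 0 < 1 - x/4 by lra.
have e1 : 1 - x/4 <= expR (- (x/4)) by have := expR_ge1Dx (-(x/4)); lra.
have e2 : expR (x/4) * (1 - x/4) <= 1.
  have : expR (x/4) * (1 - x/4) <= expR (x/4) * expR (- (x/4)).
    by rewrite ler_pM2l ?expR_gt0.
  by rewrite -expRD subrr expR0.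
have e3 : 0 <= expR (x/4) by exact: expR_ge0.
have -> : x = 4%:R * (x/4) by lra.
rewrite expRM_natl.
set e := expR (x/4); set u := 1 - x/4.
have : (e * u)^+4 <= 1.
  by apply: exprn_ile1 => //; rewrite mulr_ge0 // ltW.
rewrite exprMn => h.
have hu4 : 0 < u^+4 by rewrite exprn_gt0.
have : e^+4 * u^+4 <= (1 + 4%:R * (x/4) + 4/5 * (4%:R * (x/4))^+2) * u^+4.
  have -> : 4%:R * (x/4) = x by lra.
  exact: le_trans h hp.
by rewrite ler_pM2r.
Qed.

Lemma mgf_bound {R : realType} (q e : R) : 0 <= q <= 1 -> 0 < e <= 1/4 ->
  q * expR (2 * e * (1 - q - e)) + (1 - q) * expR (- (2 * e * (q + e)))
  <= 1 - e^+2.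
Proof.
move=> /andP[q0 q1] /andP[e0 e1].
have h1 := exp_bound (2 * e * (1 - q - e)).
have h2 := exp_bound (- (2 * e * (q + e))).
have r1 : -(5/8) <= 2 * e * (1 - q - e) <= 3/8 by apply/andP; split; nra.
have r2 : -(5/8) <= - (2 * e * (q + e)) <= 3/8 by apply/andP; split; nra.
have {h1 r1}h1 := h1 r1; have {h2 r2}h2 := h2 r2.
have t1 : q * expR (2 * e * (1 - q - e)) <= q * (1 + 2 * e * (1 - q - e) + 4 / 5 * (2 * e * (1 - q - e)) ^+ 2) by rewrite ler_wpM2l.
have t2 : (1 - q) * expR (- (2 * e * (q + e))) <= (1 - q) * (1 + - (2 * e * (q + e)) + 4 / 5 * (- (2 * e * (q + e))) ^+ 2) by rewrite ler_wpM2l // subr_ge0.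
apply: le_trans (lerD t1 t2) _.
have -> : q * (1 + 2 * e * (1 - q - e) + 4 / 5 * (2 * e * (1 - q - e)) ^+ 2) +
  (1 - q) * (1 + - (2 * e * (q + e)) + 4 / 5 * (- (2 * e * (q + e))) ^+ 2)
  = 1 - 2 * e^+2 + 16/5 * (e^+2 * (q * (1 - q)) + e^+2 * e^+2) by ring.
have hv : e^+2 * (q * (1 - q)) <= e^+2 / 4.
  have : q * (1 - q) <= 1/4.
    have := sqr_ge0 (q - 1/2); rewrite expr2; nra.
  have : 0 <= e^+2 by rewrite sqr_ge0.
  nra.
have he : e^+2 * e^+2 <= e^+2 / 16.
  have : e^+2 <= 1/16 by nra.
  have : 0 <= e^+2 by rewrite sqr_ge0.
  nra.
lra.
Qed.

Lemma card_sum {R : realType} (n : nat) (P : pred 'I_n) :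
  (#|[set i | P i]|)%:R = \sum_(i < n | P i) (1 : R).
Proof. rewrite sumr_const. apply: congr1. apply: eq_card => i; rewrite unfold_in /in_set /= asboolb. by []. Qed.

Lemma ga_dev {R : realType} (n : nat) (A : 'I_n -> bool) (a : bool) (Fv : 'I_n -> bool)
  (q e : R) :
  e < `|group_avg A a Fv - q| ->
  [\/ (forall i, A i != a),
      0 < \sum_(i < n) (if A i == a then (Fv i)%:R - (q + e) else 0) |
      0 < \sum_(i < n) (if A i == a then (q - e) - (Fv i)%:R else 0)].
Proof.
rewrite /group_avg /=.
have [m0|m0] := eqVneq #|[set i | A i == a]| 0%N.
  move=> _; apply: Or31 => i; apply/negP => hi.
  by have := card0_eq m0 i; rewrite unfold_in /in_set /= asboolb hi.
have mpos : 0 < (#|[set i | A i == a]|)%:R :> R by rewrite ltr0n lt0n.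
rewrite -!big_mkcond /= !sumrB (@card_sum R n (fun i => A i == a)).
rewrite (@card_sum R n (fun i => A i == a)) in mpos.
set S := \sum_(i < n | A i == a) (Fv i)%:R.
set m := \sum_(i < n | A i == a) (1:R).
have hc : forall c : R, \sum_(i < n | A i == a) c = c * m.
  by move=> c; rewrite /m mulr_sumr; apply: eq_bigr => i _; rewrite mulr1.
rewrite !hc => h.
have mne : m != 0 by rewrite gt_eqF.
have [hp|hn] := lerP 0 (S / m - q).
- apply: Or32; move: h; rewrite ger0_norm // => h.
  have : e * m < (S/m - q) * m by rewrite ltr_pM2r.
  rewrite mulrBl mulfVK //; lra.
- apply: Or33; move: h; rewrite ltr0_norm // => h.
  have : e * m < - (S/m - q) * m by rewrite ltr_pM2r.
  rewrite mulNr mulrBl mulfVK //; lra.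
Qed.
Lemma mgf_final {R : realType} (E1 E2 p q e : R) : 0 <= p ->
  q * E1 + (1 - q) * E2 <= 1 - e^+2 ->
  (1 - p) + q * p * E1 + (p - q * p) * E2 <= 1 - p * e^+2.
Proof. move=> hp h; have := ler_wpM2l hp h. lra. Qed.

Lemma pow_exp {R : realType} (n : nat) (x : R) : 0 <= x <= 1 ->
  (1 - x) ^+ n <= expR (- (n%:R * x)).
Proof.
move=> /andP[h0 h1]; rewrite -mulrN expRM_natl.
apply: lerXn2r; rewrite ?nnegrE ?expR_ge0 //; first lra.
by have := expR_ge1Dx (- x); lra.
Qed.

Lemma expm1 {R : realType} : expR (-1) <= 1/2 :> R.
Proof.
have h := expR_ge1Dx (1 : R).
rewrite expRN -[1/2]invrK ler_pV2 ?inE ?unitfE ?expR_gt0 ?gt_eqF //=; try lra.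

Qed.

Section Meas.
Context (R : realType) (d : nat).
Local Notation T := (obs R d).

Lemma mpreT {d1 d2} {T1 : measurableType d1} {T2 : measurableType d2}
  (f : T1 -> T2) B : measurable_fun setT f -> measurable B -> measurable (f @^-1` B).
Proof. by move=> hf mB; rewrite -[_ @^-1` _]setTI; apply: hf. Qed.

Lemma m_grp_fun : measurable_fun setT (@grp R d).
Proof. exact: measurableT_comp measurable_snd measurable_fst. Qed.

Lemma m_feat_fun : measurable_fun setT (@feat R d).
Proof. exact: measurableT_comp measurable_fst measurable_fst. Qed.

Lemma m_grp (a : bool) : measurable [set z : T | grp z = a].
Proof. by have := @mpreT _ _ T _ (@grp R d) [set a] m_grp_fun; apply. Qed.

Lemma m_le (f : d.-tuple R -> R) (c : R) : measurable_fun setT f ->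
  measurable [set z : T | c <= f (feat z)].
Proof.
move=> hf.
have -> : [set z : T | c <= f (feat z)] = (f \o feat) @^-1` [set` `[c, +oo[%R].
  by apply/seteqP; split => z /=; rewrite in_itv /= andbT.
by apply: mpreT; [exact: measurableT_comp hf m_feat_fun | exact: measurable_itv].
Qed.

Lemma m_lt (f : d.-tuple R -> R) (c : R) : measurable_fun setT f ->
  measurable [set z : T | c < f (feat z)].
Proof.
move=> hf.
have -> : [set z : T | c < f (feat z)] = (f \o feat) @^-1` [set` `]c, +oo[%R].
  by apply/seteqP; split => z /=; rewrite in_itv /= andbT.
by apply: mpreT; [exact: measurableT_comp hf m_feat_fun | exact: measurable_itv].
Qed.
End Meas.

Section Main.
Context (R : realType) (d : nat) (P : probability (obs R d) R)
  (dO : measure_display) (Omega : measurableType dO)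
  (Q : probability Omega R) (n : nat) (Z : 'I_n -> Omega -> obs R d).
Hypothesis hiid : iid_sample Q P Z.
Local Notation T := (obs R d).

Lemma hZ i : measurable_fun setT (Z i).
Proof. by case: hiid => h _; exact: h. Qed.
Lemma hlaw i B : measurable B -> Q (Z i @^-1` B) = P B.
Proof. by case: hiid => _ [h _]; exact: h. Qed.
Lemma hind (B : 'I_n -> set T) : (forall i, measurable (B i)) ->
  Q (\bigcap_(i in [set: 'I_n]) (Z i @^-1` B i)) =
  (\prod_(i < n) fine (Q (Z i @^-1` B i)))%:E.
Proof. by case: hiid => _ [_ h]; exact: h. Qed.

Section Cells.
Context (K : finType) (tau : T -> K)
  (htau : forall k, measurable (tau @^-1` [set k])).

Definition cfg w : {ffun 'I_n -> K} := [ffun i => tau (Z i w)].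
Definition cell (k : {ffun 'I_n -> K}) :=
  \bigcap_(i in [set: 'I_n]) (Z i @^-1` (tau @^-1` [set k i])).
Definition pk (j : K) : R := fine (P (tau @^-1` [set j])).

Lemma cellE k : cell k = [set w | cfg w = k].
Proof.
apply/seteqP; split => w /=.
  move=> h; apply/ffunP => i; rewrite ffunE; exact: (h i I).
by move=> <- i _; rewrite /= ffunE.
Qed.

Lemma Zpre_meas i B : measurable B -> measurable (Z i @^-1` B).
Proof. by move=> mB; rewrite -[_ @^-1` _]setTI; apply: hZ. Qed.

Lemma cell_meas k : measurable (cell k).
Proof.
apply: fin_bigcap_measurable; first exact: finite_finset.
by move=> i _; apply: Zpre_meas.
Qed.

Lemma Q_cell k : Q (cell k) = (\prod_(i < n) pk (k i))%:E.
Proof.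
rewrite /cell hind; last by move=> i; exact: htau.
by congr (_%:E); apply: eq_bigr => i _; rewrite hlaw.
Qed.

Lemma cell_disj k k' : k != k' -> cell k `&` cell k' = set0.
Proof.
move=> kk; apply/seteqP; split => // w; rewrite !cellE /= => -[h1 h2].
by move: kk; rewrite -h1 -h2 eqxx.
Qed.

Lemma event_sum (r : seq {ffun 'I_n -> K}) (F : pred {ffun 'I_n -> K}) : uniq r ->
  Q (\big[setU/set0]_(k <- r | F k) cell k) = (\sum_(k <- r | F k) Q (cell k))%E.
Proof.
elim: r => [|k r IH]; first by rewrite !big_nil measure0.
move=> /= /andP[kr ur]; rewrite !big_cons; case: (F k); last exact: IH ur.
rewrite measureU.
- by rewrite -(IH ur).
- exact: cell_meas.
- by apply: bigsetU_measurable => k' _; exact: cell_meas.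
apply/seteqP; split => // w [].
rewrite -bigcup_seq_cond cellE => /= hk [k' /= /andP[k'r _]].
by rewrite cellE /= => hk'; move: kr; rewrite -hk hk' k'r.
Qed.

Lemma event_eq (F : pred {ffun 'I_n -> K}) :
  [set w | F (cfg w)] = \big[setU/set0]_(k <- index_enum {ffun 'I_n -> K} | F k) cell k.
Proof.
rewrite -bigcup_seq_cond; apply/seteqP; split => w /=.
  by move=> h; exists (cfg w); [rewrite /= mem_index_enum h | rewrite cellE].
by move=> [k /= /andP[_ Fk]]; rewrite cellE /= => ->.
Qed.

Lemma event_meas (F : pred {ffun 'I_n -> K}) : measurable [set w | F (cfg w)].
Proof.
by rewrite event_eq; apply: bigsetU_measurable => k _; exact: cell_meas.
Qed.

Lemma Q_event (F : pred {ffun 'I_n -> K}) :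
  Q [set w | F (cfg w)] = (\sum_(k | F k) \prod_(i < n) pk (k i))%:E.
Proof.
rewrite event_eq event_sum ?index_enum_uniq// -sumEFin.
by apply: eq_bigr => k _; rewrite Q_cell.
Qed.

Lemma pk_ge0 j : 0 <= pk j.
Proof. exact/fine_ge0/measure_ge0. Qed.

Lemma chernoff (y : K -> R) (lam : R) : 0 <= lam ->
  (Q [set w | (0 <= \sum_(i < n) y (cfg w i))%R] <=
   ((\sum_j pk j * expR (lam * y j)) ^+ n)%:E)%E.
Proof.
move=> hl; rewrite (Q_event (fun k => 0 <= \sum_(i < n) y (k i))) lee_fin.
have -> : (\sum_j pk j * expR (lam * y j)) ^+ n =
   \prod_(i < n) \sum_j pk j * expR (lam * y j).
  by rewrite prodr_const card_ord.
rewrite bigA_distr_bigA /= [leRHS](bigID (fun k : {ffun 'I_n -> K} => 0 <= \sum_(i < n) y (k i))) /=.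
rewrite -[leLHS]addr0; apply: lerD; last first.
  by apply: sumr_ge0 => k _; apply: prodr_ge0 => i _; rewrite mulr_ge0 ?pk_ge0 ?expR_ge0.
apply: ler_sum => k hk; rewrite big_split /= -expR_sum.
rewrite -[leLHS]mulr1 ler_wpM2l //; first by apply: prodr_ge0 => i _; exact: pk_ge0.
by rewrite -expR0 ler_expR -mulr_sumr mulr_ge0.
Qed.
End Cells.


Lemma fineP_split (A B : set T) : measurable A -> measurable B ->
  fine (P A) = fine (P (A `&` B)) + fine (P (A `\` B)).
Proof.
move=> mA mB; rewrite (measureDI P mA mB) fineD ?fin_num_measure //.
- by rewrite addrC.
- exact: measurableD.
- exact: measurableI.
Qed.

Lemma fineP_ge0 (A : set T) : 0 <= fine (P A).
Proof. exact/fine_ge0/measure_ge0. Qed.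


Lemma ga_eq (A : 'I_n -> bool) (b : bool) (Fv : 'I_n -> bool) :
  group_avg A b Fv = group_avg (fun i => A i == b) true Fv :> R.
Proof.
rewrite /group_avg /=.
have E : forall i, ((A i == b) == true) = (A i == b) by move=> i; rewrite eqb_id.
rewrite (eq_bigl _ _ E).
have -> : [set i | (A i == b) == true] = [set i | A i == b].
  by apply/seteqP; split => i /=; rewrite E.
by [].
Qed.

Section Group.
Variables (F : T -> bool) (mF : measurable [set z | F z]) (a : bool).
Definition Gs := [set z : T | grp z = a].
Definition Fs := [set z : T | F z].
Definition tauG (z : T) : bool * bool := (grp z == a, F z).

Lemma mGs : measurable Gs. Proof. exact: m_grp. Qed.

Lemma htauG k : measurable (tauG @^-1` [set k]).
Proof.
case: k => g s.
have -> : tauG @^-1` [set (g, s)] = [set z | (grp z == a) = g] `&` [set z | F z = s].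
  by apply/seteqP; split => z /=; rewrite /tauG; [case=> -> -> | case=> -> ->].
apply: measurableI.
  by have := @mpreT _ _ T _ (@grp R d) [set x | (x == a) = g] (@m_grp_fun R d); apply.
case: s.
  by have -> : [set z | F z = true] = [set z | F z] by apply/seteqP; split => z /=.
have -> : [set z | F z = false] = ~` [set z | F z].
  by apply/seteqP; split => z /=; [move=> ->|move/negP/negbTE].
exact: measurableC.
Qed.

Lemma pkG (g s : bool) : pk _ tauG (g, s) =
  fine (P ((if g then Gs else ~` Gs) `&` (if s then Fs else ~` Fs))).
Proof.
rewrite /pk; congr (fine (P _)); apply/seteqP; split => z /=; rewrite /tauG.
  case=> <- <-; split; first by case: eqP.
  by rewrite /Fs /=; case hF: (F z) => //=; rewrite hF.
case: g; case: s => /= -[h1 h2]; congr pair; apply/eqP => //;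
  rewrite ?eqb_id ?eqbF_neg //; try exact/negP; try exact/eqP.
Qed.

Lemma mFs : measurable Fs. Proof. exact: mF. Qed.

Lemma split_Gs : fine (P (Gs `&` ~` Fs)) = pA P a - fine (P (Gs `&` Fs)).
Proof.
have h := fineP_split Gs Fs mGs mFs; rewrite setDE in h.
rewrite (_ : pA P a = fine (P Gs)) // h; ring.
Qed.

Lemma split_nGs : fine (P (~` Gs `&` Fs)) + fine (P (~` Gs `&` ~` Fs)) = 1 - pA P a.
Proof.
have mnG : measurable (~` Gs) by exact: measurableC mGs.
have h := fineP_split (~` Gs) Fs mnG mFs; rewrite setDE in h; rewrite -h.
rewrite probability_setC ?mGs //.
have fG : P Gs \is a fin_num by apply: fin_num_measure; exact: mGs.
have := @fineB R 1%E (P Gs) isT fG; rewrite /= => ->; by [].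
exact: mGs.
Qed.

Lemma mgf_group (y : bool * bool -> R) (lam : R) : (forall s, y (false, s) = 0) ->
  \sum_j pk _ tauG j * expR (lam * y j) =
  (1 - pA P a) + fine (P (Gs `&` Fs)) * expR (lam * y (true, true))
  + (pA P a - fine (P (Gs `&` Fs))) * expR (lam * y (true, false)).
Proof.
move=> hy.
pose f := fun g s => pk _ tauG (g, s) * expR (lam * y (g, s)).
rewrite (eq_bigr (fun j => f j.1 j.2)); last by case.
rewrite -(pair_bigA _ f) /= /f.
rewrite !big_bool /= !pkG /= !hy !mulr0 expR0 !mulr1.
rewrite -split_nGs -split_Gs; ring.
Qed.


Definition qG := fine (P [set z | F z /\ grp z = a]) / pA P a.
Definition gaw (w : Omega) : R :=
  group_avg (fun i => grp (Z i w)) a (fun i => F (Z i w)).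

Lemma gaw_cfg w : gaw w = group_avg (fun i => (cfg _ tauG w i).1) true
  (fun i => (cfg _ tauG w i).2).
Proof.
rewrite /gaw ga_eq; congr group_avg; apply: funext => i; by rewrite /cfg ffunE.
Qed.

Lemma Ey_meas (y : bool * bool -> R) :
  measurable [set w | (0 <= \sum_(i < n) y (cfg _ tauG w i))%R].
Proof.
exact: (@event_meas _ _ htauG (fun k => 0 <= \sum_(i < n) y (k i))).
Qed.

Lemma Ey_bound (y : bool * bool -> R) (lam e : R) :
  0 <= lam -> (forall s, y (false, s) = 0) ->
  0 < pA P a -> 0 <= e <= 1 ->
  qG * expR (lam * y (true, true)) + (1 - qG) * expR (lam * y (true, false))
    <= 1 - e^+2 ->
  (Q [set w | (0 <= \sum_(i < n) y (cfg _ tauG w i))%R] <=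
   (expR (- (n%:R * (pA P a * e^+2))))%:E)%E.
Proof.
move=> hl hy hp he hm.
apply: le_trans (@chernoff _ _ htauG y lam hl) _; rewrite lee_fin mgf_group //.
have hr : fine (P (Gs `&` Fs)) = qG * pA P a.
  rewrite /qG mulfVK ?gt_eqF // setIC //.
rewrite hr.
have hpa1 : pA P a <= 1.
  have := split_Gs; have := fineP_ge0 (Gs `&` ~` Fs); have := fineP_ge0 (Gs `&` Fs).
  have := split_nGs; have := fineP_ge0 (~` Gs `&` Fs); have := fineP_ge0 (~` Gs `&` ~` Fs).
  lra.
have hq0 : 0 <= qG * pA P a by rewrite -hr fineP_ge0.
have hq1 : 0 <= pA P a - qG * pA P a by rewrite -hr -split_Gs fineP_ge0.
have hx : 0 <= pA P a * e^+2 <= 1.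
  case/andP: he => he0 he1.
  have h2 : e^+2 <= 1 by rewrite expr2; nra.
  apply/andP; split; first by rewrite mulr_ge0 ?sqr_ge0 // ltW.
  nra.
apply: le_trans (pow_exp n _ hx).
have hE1 := expR_ge0 (lam * y (true, true)).
have hE2 := expR_ge0 (lam * y (true, false)).
apply: lerXn2r; rewrite ?nnegrE.
- have h1p : 0 <= 1 - pA P a by lra.
  by apply: addr_ge0; [apply: addr_ge0 | ]; rewrite // mulr_ge0.
- by case/andP: hx => _; rewrite subr_ge0.
- by apply: mgf_final => //; exact: ltW.
Qed.



Lemma qG_range : 0 < pA P a -> 0 <= qG <= 1.
Proof.
move=> hp.
have hr : fine (P (Gs `&` Fs)) = qG * pA P a.
  rewrite /qG mulfVK ?gt_eqF // setIC //.
have hq0 : 0 <= qG * pA P a by rewrite -hr fineP_ge0.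
have hq1 : 0 <= pA P a - qG * pA P a by rewrite -hr -split_Gs fineP_ge0.
apply/andP; split; nra.
Qed.

Definition y0 (k : bool * bool) : R := if k.1 == true then -1 else 0.
Definition yU (e : R) (k : bool * bool) : R :=
  if k.1 == true then (k.2)%:R - (qG + e) else 0.
Definition yL (e : R) (k : bool * bool) : R :=
  if k.1 == true then (qG - e) - (k.2)%:R else 0.

Lemma group_bound (e : R) : 0 < e <= 1/4 -> 0 < pA P a ->
  measurable [set w | (e < `|gaw w - qG|)%R] /\
  (Q [set w | (e < `|gaw w - qG|)%R] <=
    (3 * expR (- (n%:R * (pA P a * e^+2))))%:E)%E.
Proof.
move=> he hp.
have hq := qG_range hp.
have he1 : 0 <= e <= 1 by case/andP: he => h1 h2; apply/andP; split; lra.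
have he2 : e^+2 <= 1/16 by case/andP: he => h1 h2; rewrite expr2; nra.
have mU : measurable [set w | (e < `|gaw w - qG|)%R].
  have -> : [set w | (e < `|gaw w - qG|)%R] =
    [set w | (fun k : {ffun 'I_n -> bool * bool} =>
       e < `|group_avg (fun i => (k i).1) true (fun i => (k i).2) - qG|)
       (cfg _ tauG w)].
    by apply/seteqP; split => w /=; rewrite gaw_cfg.
  exact: (@event_meas _ _ htauG (fun k : {ffun 'I_n -> bool * bool} =>
       e < `|group_avg (fun i => (k i).1) true (fun i => (k i).2) - qG|)).
split => //.
set E0 := [set w | (0 <= \sum_(i < n) y0 (cfg _ tauG w i))%R].
set EU := [set w | (0 <= \sum_(i < n) yU e (cfg _ tauG w i))%R].
set EL := [set w | (0 <= \sum_(i < n) yL e (cfg _ tauG w i))%R].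
have m0 : measurable E0 by exact: Ey_meas.
have mUU : measurable EU by exact: Ey_meas.
have mL : measurable EL by exact: Ey_meas.
have sub : [set w | (e < `|gaw w - qG|)%R] `<=` E0 `|` EU `|` EL.
  move=> w /=; rewrite gaw_cfg => /ga_dev [h0|hU|hL].
  - left; left; rewrite /E0 /= big1 // => i _; rewrite /y0.
    by rewrite (negbTE (h0 i)).
  - by left; right; exact: ltW.
  - by right; exact: ltW.
have B0 : (Q E0 <= (expR (- (n%:R * (pA P a * e^+2))))%:E)%E.
  apply: (Ey_bound y0 1 e) => //; rewrite /y0 /= !mul1r.
  have := @expm1 R; lra.
have BU : (Q EU <= (expR (- (n%:R * (pA P a * e^+2))))%:E)%E.
  apply: (Ey_bound (yU e) (2 * e) e) => //; first by case/andP: he => h1 _; lra.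
  rewrite /yU /=.
  have -> : 2 * e * (1 - (qG + e)) = 2 * e * (1 - qG - e) by ring.
  have -> : 2 * e * (0 - (qG + e)) = - (2 * e * (qG + e)) by ring.
  exact: mgf_bound.
have BL : (Q EL <= (expR (- (n%:R * (pA P a * e^+2))))%:E)%E.
  apply: (Ey_bound (yL e) (2 * e) e) => //; first by case/andP: he => h1 _; lra.
  rewrite /yL /=.
  have hq' : 0 <= 1 - qG <= 1 by case/andP: hq => h1 h2; apply/andP; split; lra.
  have := mgf_bound (1 - qG) e hq' he.
  have -> : 2 * e * (1 - (1 - qG) - e) = 2 * e * (qG - e - 0) by ring.
  have -> : - (2 * e * ((1 - qG) + e)) = 2 * e * (qG - e - 1) by ring.
  have -> : 1 - (1 - qG) = qG by ring.
  by rewrite addrC.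
apply: le_trans (le_measure _ _ _ sub) _; rewrite ?inE //.
- by apply: measurableU => //; apply: measurableU.
apply: le_trans (measureU2 _ _ _) _ => //; first by apply: measurableU.
apply: le_trans (leeD (measureU2 _ _ _) (lexx _)) _ => //.
apply: le_trans (leeD (leeD B0 BU) BL) _.
by rewrite -!EFinD lee_fin; lra.
Qed.

End Group.


Lemma pA_sum : pA P true + pA P false = 1.
Proof.
rewrite /pA.
have -> : [set z : T | grp z = false] = ~` [set z : T | grp z = true].
  by apply/seteqP; split => z /=; case: (grp z).
rewrite probability_setC; last exact: m_grp.
have fG : P [set z : T | grp z = true] \is a fin_num by apply: fin_num_measure; exact: m_grp.
have := @fineB R 1%E (P [set z : T | grp z = true]) isT fG; rewrite /= => ->.
by rewrite addrC subrK.
Qed.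

Definition tau2 (F1 F0 : T -> bool) (z : T) : bool * (bool * bool) :=
  (grp z, (F1 z, F0 z)).

Lemma mbool (F1 : T -> bool) (b : bool) : measurable [set z | F1 z] ->
  measurable [set z | F1 z = b].
Proof.
move=> m1; case: b.
  by have -> : [set z | F1 z = true] = [set z | F1 z] by apply/seteqP; split => z /=.
have -> : [set z | F1 z = false] = ~` [set z | F1 z].
  by apply/seteqP; split => z /=; [move=> ->|move/negP/negbTE].
exact: measurableC.
Qed.

Lemma htau2 (F1 F0 : T -> bool) : measurable [set z | F1 z] -> measurable [set z | F0 z] ->
  forall k, measurable (tau2 F1 F0 @^-1` [set k]).
Proof.
move=> m1 m0 [g [b1 b0]].
have -> : tau2 F1 F0 @^-1` [set (g, (b1, b0))] =
  [set z | grp z = g] `&` ([set z | F1 z = b1] `&` [set z | F0 z = b0]).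
  by apply/seteqP; split => z /=; rewrite /tau2; [case=> -> -> -> | case=> -> [-> ->]].
apply: measurableI; first exact: m_grp.
by apply: measurableI; apply: mbool.
Qed.

Lemma meas_two (F1 F0 : T -> bool) (D e : R) :
  measurable [set z | F1 z] -> measurable [set z | F0 z] ->
  measurable [set w | (e < `|group_avg (fun i => grp (Z i w)) true (fun i => F1 (Z i w))
     - group_avg (fun i => grp (Z i w)) false (fun i => F0 (Z i w)) - D|)%R].
Proof.
move=> m1 m0.
have -> : [set w | (e < `|group_avg (fun i => grp (Z i w)) true (fun i => F1 (Z i w))
     - group_avg (fun i => grp (Z i w)) false (fun i => F0 (Z i w)) - D|)%R] =
  [set w | (fun k : {ffun 'I_n -> bool * (bool * bool)} =>
    e < `|group_avg (fun i => (k i).1) true (fun i => (k i).2.1)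
       - group_avg (fun i => (k i).1) false (fun i => (k i).2.2) - D|)
    (cfg _ (tau2 F1 F0) w)].
  have E1 : forall w, (fun i => (cfg _ (tau2 F1 F0) w i).1) = (fun i => grp (Z i w)).
    by move=> w; apply: funext => i; rewrite /cfg ffunE.
  have E2 : forall w, (fun i => (cfg _ (tau2 F1 F0) w i).2.1) = (fun i => F1 (Z i w)).
    by move=> w; apply: funext => i; rewrite /cfg ffunE.
  have E3 : forall w, (fun i => (cfg _ (tau2 F1 F0) w i).2.2) = (fun i => F0 (Z i w)).
    by move=> w; apply: funext => i; rewrite /cfg ffunE.
  by apply/seteqP; split => w /=; rewrite E1 E2 E3.
exact: (@event_meas _ _ (@htau2 F1 F0 m1 m0) (fun k : {ffun 'I_n -> bool * (bool * bool)} =>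
    e < `|group_avg (fun i => (k i).1) true (fun i => (k i).2.1)
       - group_avg (fun i => (k i).1) false (fun i => (k i).2.2) - D|)).
Qed.


Lemma two_bound (F1 F0 : T -> bool) (e : R) :
  measurable [set z | F1 z] -> measurable [set z | F0 z] ->
  0 < e -> e / 2 <= 1/4 -> 0 < pA P true -> 0 < pA P false ->
  (Q [set w | (e < `|group_avg (fun i => grp (Z i w)) true (fun i => F1 (Z i w))
     - group_avg (fun i => grp (Z i w)) false (fun i => F0 (Z i w))
     - (qG F1 true - qG F0 false)|)%R] <=
   (6 * expR (- (n%:R * (Num.min (pA P true) (pA P false) * (e / 2)^+2))))%:E)%E.
Proof.
move=> m1 m0 he he4 hp1 hp0.
have hd : 0 < e / 2 <= 1/4 by apply/andP; split => //; lra.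
have [mU1 B1] := group_bound F1 m1 true (e / 2) hd hp1.
have [mU0 B0] := group_bound F0 m0 false (e / 2) hd hp0.
set m := Num.min (pA P true) (pA P false).
have Bm : forall x, m <= x ->
    expR (- (n%:R * (x * (e / 2)^+2))) <= expR (- (n%:R * (m * (e / 2)^+2))).
  by move=> x hx; rewrite ler_expR lerN2 ler_wpM2l // ler_wpM2r // sqr_ge0.
have hm1 : m <= pA P true by rewrite /m ge_min lexx.
have hm0 : m <= pA P false by rewrite /m ge_min lexx orbT.
have sub : [set w | (e < `|group_avg (fun i => grp (Z i w)) true (fun i => F1 (Z i w))
     - group_avg (fun i => grp (Z i w)) false (fun i => F0 (Z i w))
     - (qG F1 true - qG F0 false)|)%R] `<=`
   [set w | (e / 2 < `|gaw F1 true w - qG F1 true|)%R] `|`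
   [set w | (e / 2 < `|gaw F0 false w - qG F0 false|)%R].
  move=> w /= h; rewrite /gaw.
  set x1 := group_avg _ true _ in h *; set x0 := group_avg _ false _ in h *.
  have [h1|h1] := ltrP (e / 2) `|x1 - qG F1 true|; first by left.
  have [h2|h2] := ltrP (e / 2) `|x0 - qG F0 false|; first by right.
  exfalso.
  have : `|x1 - x0 - (qG F1 true - qG F0 false)| <= `|x1 - qG F1 true| + `|x0 - qG F0 false|.
    have -> : x1 - x0 - (qG F1 true - qG F0 false) = (x1 - qG F1 true) - (x0 - qG F0 false) by ring.
    exact: ler_normB.
  lra.
have mS := meas_two F1 F0 (qG F1 true - qG F0 false) e m1 m0.
have hle := le_measure Q (mem_set mS) (mem_set (measurableU _ _ mU1 mU0)) sub.
apply: le_trans hle _.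
apply: le_trans (measureU2 _ _ _) _ => //.
apply: le_trans (leeD B1 B0) _.
rewrite -EFinD lee_fin.
have := Bm _ hm1; have := Bm _ hm0; lra.
Qed.


Lemma final_bound (eta : bool -> d.-tuple R -> R) :
  is_regression_fun P eta ->
  0 < pA P false -> 0 < pA P true ->
  forall (t eps : R),
  0 < eps -> eps <= Num.sqrt (Num.min (pA P true) (pA P false) / 2) ->
  (maxe (Q [set w | (eps < `|Dn_plus P eta Z t w - Dplus P eta t|)%R])
        (Q [set w | (eps < `|Dn_minus P eta Z t w - Dminus P eta t|)%R])
   <= (8 * expR (- (n%:R * Num.min (pA P true) (pA P false) * eps ^+ 2) / 4))%R%:E)%E.
Proof.
move=> hreg hp0 hp1 t eps he hle.
have [me1 _] := hreg true; have [me0 _] := hreg false.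
set m := Num.min (pA P true) (pA P false) in hle *.
have hm1 : m <= pA P true by rewrite /m ge_min lexx.
have hm0 : m <= pA P false by rewrite /m ge_min lexx orbT.
have hmp : 0 < m by rewrite /m lt_min hp1 hp0.
have hs := pA_sum.
have he2 : eps ^+ 2 <= m / 2.
  have h0 : 0 <= m / 2 by rewrite divr_ge0 // ltW.
  rewrite -(sqr_sqrtr h0) expr2 [X in _ <= X]expr2.
  by apply: ler_pM => //; exact: ltW.
have he4 : eps / 2 <= 1/4 by nra.
have fin : ((6 * expR (- (n%:R * (m * (eps / 2)^+2))))%:E <=
    (8 * expR (- (n%:R * m * eps ^+ 2) / 4))%:E)%E.
  rewrite lee_fin.
  have -> : - (n%:R * m * eps ^+ 2) / 4 = - (n%:R * (m * (eps / 2)^+2)) by field.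
  have := expR_ge0 (- (n%:R * (m * (eps / 2)^+2))); lra.
rewrite ge_max; apply/andP; split; apply: le_trans fin.
- exact: (two_bound
    (fun z => 1/2 + t / (2 * pA P true) <= eta true (feat z))
    (fun z => 1/2 - t / (2 * pA P false) < eta false (feat z)) eps
    (@m_le R d (eta true) _ me1) (@m_lt R d (eta false) _ me0) he he4 hp1 hp0).
- exact: (two_bound
    (fun z => 1/2 + t / (2 * pA P true) < eta true (feat z))
    (fun z => 1/2 - t / (2 * pA P false) <= eta false (feat z)) eps
    (@m_lt R d (eta true) _ me1) (@m_le R d (eta false) _ me0) he he4 hp1 hp0).
Qed.

End Main.



Theorem lemmaC7 (R : realType) (d : nat)
  (P : probability (obs R d) R) (eta : bool -> d.-tuple R -> R)
  (dO : measure_display) (Omega : measurableType dO) (Q : probability Omega R)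
  (n : nat) (Z : 'I_n -> Omega -> obs R d) :
  is_regression_fun P eta ->
  iid_sample Q P Z ->
  0 < pA P false -> 0 < pA P true ->
  forall (t eps : R),
  0 < eps -> eps <= Num.sqrt (Num.min (pA P true) (pA P false) / 2) ->
  (maxe (Q [set w | (eps < `|Dn_plus P eta Z t w - Dplus P eta t|)%R])
        (Q [set w | (eps < `|Dn_minus P eta Z t w - Dminus P eta t|)%R])
   <= (8 * expR (- (n%:R * Num.min (pA P true) (pA P false) * eps ^+ 2) / 4))%R%:E)%E.
Proof.
move=> hreg hiid hp0 hp1 t eps he hle.
exact: (@final_bound R d P dO Omega Q n Z hiid eta hreg hp0 hp1 t eps he hle).
Qed.
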